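(* Let $R>0$, let $\mathcal K$ be a nonempty closed subset of $S^{d-1}$ contained in a hemisphere $\{v\in S^{d-1}:\langle v,w\rangle\ge0\}$ for some $w\in S^{d-1}$, and let $\mathcal N=\mathrm{Nor}(C_{\mathcal K},o)\cap S^{d-1}$. The following are equivalent: (a) $\mathcal K$ is spherically convex; (b) $\mathrm{reach}(C_{\mathcal K})\ge R$; (c) $C_{\mathcal K}=C_{\mathcal N}$.
   Context: $S^{d-1}$ is the unit sphere, $o$ the origin, $B(x)=\{y:|y-x|<R\}$, $co(\cdot)$ the convex hull. For $\mathcal K\subset S^{d-1}$, $C_{\mathcal K}=\bigcap_{v\in\mathcal K}(\mathbb{R}^d\setminus B(Rv))$ is the $R$-cone with vertex $o$. With $K=\{\lambda v:\lambda\ge0,v\in\mathcal K\}$, the spherical convex hull is $co_{sph}(\mathcal K)=co(K)\cap S^{d-1}$, and $\mathcal K$ is spherically convex if $co_{sph}(\mathcal K)=\mathcal K$. Tangent cone: $\mathrm{Tan}(A,q)=\{v: \forall\varepsilon>0\ \exists x\in A,\ |x-q|<\varepsilon,\ \exists r>0,\ |r(x-q)-v|<\varepsilon\}$; normal cone: $\mathrm{Nor}(A,q)=\{u:\langle u,v\rangle\le0\ \forall v\in\mathrm{Tan}(A,q)\}$. $\mathrm{Unp}(A)$ is the set of points with a unique nearest point in $A$; $\mathrm{reach}(A,a)=\sup\{\rho>0:\{x:|x-a|<\rho\}\subset\mathrm{Unp}(A)\}$, $\mathrm{reach}(A)=\inf_{a\in A}\mathrm{reach}(A,a)$. *)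

(* Defs.v *)
From HB Require Import structures.
From mathcomp Require Import all_boot all_order all_algebra.
From mathcomp Require Import all_classical all_reals ereal.
Set Implicit Arguments. Unset Strict Implicit. Unset Printing Implicit Defensive.
Import Order.TTheory GRing.Theory Num.Theory.
Local Open Scope classical_set_scope.
Local Open Scope ring_scope.

Section Defs.
Variables (R : realType) (d : nat).
Notation V := 'rV[R]_d.

Definition dotp (u v : V) : R := \sum_(i < d) u ord0 i * v ord0 i.
Definition enorm (u : V) : R := Num.sqrt (dotp u u).

(* origin o is the zero vector 0 *)
Definition sphere : set V := [set v | enorm v = 1].

Definition eball (x : V) (r : R) : set V := [set y | enorm (y - x) < r].

Definition eclosed (A : set V) : Prop :=
  forall x, (forall e, 0 < e -> exists2 a, A a & enorm (a - x) < e) -> A x.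

Definition Rcone (r : R) (K : set V) : set V :=
  \bigcap_(v in K) ~` eball (r *: v) r.

Definition convex_set (C : set V) : Prop :=
  forall x y t, C x -> C y -> 0 <= t -> t <= 1 -> C (t *: x + (1 - t) *: y).

Definition conv (A : set V) : set V :=
  [set x | forall C, convex_set C -> A `<=` C -> C x].

Definition pos_hull (K : set V) : set V :=
  [set x | exists2 l, 0 <= l & exists2 v, K v & x = l *: v].

Definition co_sph (K : set V) : set V := conv (pos_hull K) `&` sphere.

Definition sph_convex (K : set V) : Prop := co_sph K = K.

Definition Tan (A : set V) (q : V) : set V :=
  [set v | forall e, 0 < e -> exists2 x, A x /\ enorm (x - q) < e &
             exists2 r, 0 < r & enorm (r *: (x - q) - v) < e].

Definition Nor (A : set V) (q : V) : set V :=
  [set u | forall v, Tan A q v -> dotp u v <= 0].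

Definition Unp (A : set V) : set V :=
  [set x | exists! a, A a /\ forall b, A b -> enorm (x - a) <= enorm (x - b)].

Definition reach_at (A : set V) (a : V) : \bar R :=
  ereal_sup [set rho%:E | rho in [set rho : R | 0 < rho /\ eball a rho `<=` Unp A]].

Definition reach (A : set V) : \bar R := ereal_inf [set reach_at A a | a in A].

End Defs.

(* Main.v *)
Require Import Defs.
From HB Require Import structures.
From mathcomp Require Import all_boot all_order all_algebra.
From mathcomp Require Import all_classical all_reals ereal.
From mathcomp Require Import topology normedtype derive matrix_normedtype.
From mathcomp Require Import ring lra.
Import Order.TTheory GRing.Theory Num.Theory.
Import numFieldTopology.Exports numFieldNormedType.Exports.
Set Implicit Arguments. Unset Strict Implicit. Unset Printing Implicit Defensive.
Local Open Scope classical_set_scope.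
Local Open Scope ring_scope.

Section Basic.
Variables (R : realType) (d : nat).
Local Notation V := 'rV[R]_d.
Local Notation dp := (@dotp R d).
Local Notation en := (@enorm R d).

Lemma dpC (u v : V) : dp u v = dp v u.
Proof. by apply: eq_bigr => i _; rewrite mulrC. Qed.

Lemma dpDl (u v w : V) : dp (u + v) w = dp u w + dp v w.
Proof. by rewrite /dotp -big_split; apply: eq_bigr => i _; rewrite mxE mulrDl. Qed.

Lemma dpZl a (u w : V) : dp (a *: u) w = a * dp u w.
Proof. by rewrite /dotp mulr_sumr; apply: eq_bigr => i _; rewrite mxE mulrA. Qed.

Lemma dpNl (u w : V) : dp (- u) w = - dp u w.
Proof. by rewrite -scaleN1r dpZl mulN1r. Qed.

Lemma dpBl (u v w : V) : dp (u - v) w = dp u w - dp v w.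
Proof. by rewrite dpDl dpNl. Qed.

Lemma dpDr (u v w : V) : dp w (u + v) = dp w u + dp w v.
Proof. by rewrite dpC dpDl !(dpC w). Qed.
Lemma dpZr a (u w : V) : dp w (a *: u) = a * dp w u.
Proof. by rewrite dpC dpZl dpC. Qed.
Lemma dpNr (u w : V) : dp w (- u) = - dp w u.
Proof. by rewrite dpC dpNl dpC. Qed.
Lemma dpBr (u v w : V) : dp w (u - v) = dp w u - dp w v.
Proof. by rewrite dpDr dpNr. Qed.
Lemma dp0l (u : V) : dp 0 u = 0.
Proof. by rewrite /dotp big1 // => i _; rewrite mxE mul0r. Qed.
Lemma dp0r (u : V) : dp u 0 = 0.
Proof. by rewrite dpC dp0l. Qed.

Lemma dp_ge0 (u : V) : 0 <= dp u u.
Proof. by apply: sumr_ge0 => i _; rewrite -expr2 sqr_ge0. Qed.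

Lemma dp_eq0 (u : V) : dp u u = 0 -> u = 0.
Proof.
move=> /eqP; rewrite psumr_eq0 => [/allP H|i _]; last by rewrite -expr2 sqr_ge0.
apply/rowP => i; rewrite mxE; have := H i (mem_index_enum i).
by rewrite /= mulf_eq0 orbb => /eqP.
Qed.

Lemma en_ge0 (u : V) : 0 <= en u.
Proof. exact: sqrtr_ge0. Qed.

Lemma en_sq (u : V) : en u ^+ 2 = dp u u.
Proof. by rewrite sqr_sqrtr // dp_ge0. Qed.

Lemma en_sqrt (u : V) : en u = Num.sqrt (dp u u).
Proof. by []. Qed.

Lemma en0 : en 0 = 0.
Proof. by rewrite /enorm dp0l sqrtr0. Qed.

Lemma en_eq0 (u : V) : en u = 0 -> u = 0.
Proof. by move=> h; apply: dp_eq0; rewrite -en_sq h expr0n. Qed.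

Lemma enZ a (u : V) : en (a *: u) = `|a| * en u.
Proof. by rewrite /enorm dpZl dpZr mulrA -expr2 sqrtrM ?sqr_ge0 // sqrtr_sqr. Qed.

Lemma enN (u : V) : en (- u) = en u.
Proof. by rewrite -scaleN1r enZ normrN1 mul1r. Qed.

Lemma enB (u v : V) : en (u - v) = en (v - u).
Proof. by rewrite -enN opprB. Qed.

Lemma n2D (u v : V) : dp (u + v) (u + v) = dp u u + 2 * dp u v + dp v v.
Proof. rewrite dpDl !dpDr (dpC v u); ring. Qed.

Lemma n2B (u v : V) : dp (u - v) (u - v) = dp u u - 2 * dp u v + dp v v.
Proof. rewrite dpBl !dpBr (dpC v u); ring. Qed.

Lemma CS2 (u v : V) : dp u v ^+ 2 <= dp u u * dp v v.
Proof.
have [v0|vn0] := eqVneq v 0; first by rewrite v0 dp0r dp0r expr0n mulr0.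
have pv : 0 < dp v v.
  rewrite lt_def dp_ge0 andbT; apply/eqP => /dp_eq0; exact/eqP.
have := dp_ge0 (dp v v *: u - dp u v *: v).
rewrite n2B !dpZl !dpZr ?(dpC v u) => h.
have : 0 <= dp v v * (dp u u * dp v v - dp u v ^+ 2) by nra.
by rewrite pmulr_rge0 // subr_ge0.
Qed.

Lemma CS (u v : V) : dp u v <= en u * en v.
Proof.
have h1 := CS2 u v; rewrite -!en_sq -exprMn in h1.
have hm : 0 <= en u * en v by apply: mulr_ge0; apply: en_ge0.
rewrite leNgt; apply/negP => h3.
have : (en u * en v) ^+ 2 < dp u v ^+ 2.
  by rewrite ltr_pXn2r // ?nnegrE //; exact: (le_trans hm (ltW h3)).
by rewrite ltNge h1.
Qed.

Lemma sq_lt (a b : R) : 0 <= a -> 0 <= b -> (a < b) = (a ^+ 2 < b ^+ 2).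
Proof. by move=> ha hb; rewrite ltr_pXn2r. Qed.
Lemma sq_le (a b : R) : 0 <= a -> 0 <= b -> (a <= b) = (a ^+ 2 <= b ^+ 2).
Proof. by move=> ha hb; rewrite ler_pXn2r. Qed.

Lemma en_ltE (u : V) (a : R) : 0 <= a -> (en u < a) = (dp u u < a ^+ 2).
Proof. by move=> ha; rewrite sq_lt ?en_ge0 // en_sq. Qed.
Lemma en_leE (u : V) (a : R) : 0 <= a -> (en u <= a) = (dp u u <= a ^+ 2).
Proof. by move=> ha; rewrite sq_le ?en_ge0 // en_sq. Qed.
Lemma en_leE2 (u v : V) : (en u <= en v) = (dp u u <= dp v v).
Proof. by rewrite sq_le ?en_ge0 // !en_sq. Qed.
Lemma en_ltE2 (u v : V) : (en u < en v) = (dp u u < dp v v).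
Proof. by rewrite sq_lt ?en_ge0 // !en_sq. Qed.

Lemma sphereE (v : V) : sphere v <-> dp v v = 1.
Proof.
rewrite /sphere /=; split => h.
  by rewrite -en_sq h expr1n.
by rewrite /enorm h sqrtr1.
Qed.

Lemma CSabs (u v : V) : `|dp u v| <= en u * en v.
Proof.
rewrite ler_norml CS andbT lerNl -dpNl.
by rewrite -(enN u) CS.
Qed.

Lemma en_triangle (u v : V) : en (u + v) <= en u + en v.
Proof.
rewrite sq_le ?en_ge0 ?addr_ge0 ?en_ge0 // en_sq n2D -!en_sq.
have := CS u v; nra.
Qed.

Lemma en_tri3 (u v w : V) : en (u - w) <= en (u - v) + en (v - w).
Proof. by have := en_triangle (u - v) (v - w); rewrite addrA subrK. Qed.

Lemma en_rev (u v : V) : en u - en v <= en (u - v).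
Proof. by rewrite lerBlDr; have := en_triangle (u - v) v; rewrite subrK addrC. Qed.

Lemma dp_le_en (u v : V) : dp v v = 1 -> dp u v <= en u.
Proof. move=> h; have := CS u v; by rewrite /enorm h sqrtr1 mulr1 -/(enorm u). Qed.

End Basic.


Section Topo.
Variables (R : realType) (d : nat).
Local Notation V := 'rV[R]_d.
Local Notation dp := (@dotp R d).
Local Notation en := (@enorm R d).

Lemma coord_le_mx (x : V) i : `|x ord0 i| <= `|x|.
Proof. by rewrite [leRHS]/Num.norm /= mx_normrE; exact: (le_bigmax _ (fun ij => `|x ij.1 ij.2|) (ord0, i)). Qed.

Lemma coord_le_en (x : V) i : `|x ord0 i| <= en x.
Proof.
rewrite sq_le ?normr_ge0 ?en_ge0 // en_sq /dotp (bigD1 i) //= real_normK ?num_real //.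
rewrite lerDl; apply: sumr_ge0 => j _; by rewrite -expr2 sqr_ge0.
Qed.

Lemma mx_le_en (x : V) : `|x| <= en x.
Proof.
rewrite [leLHS]/Num.norm /= mx_normrE; apply: bigmax_le => [|[i j] _]; first exact: en_ge0.
by rewrite /= (ord1 i); exact: coord_le_en.
Qed.

Lemma en_le_mx (x : V) : dp x x <= d%:R * `|x| ^+ 2.
Proof.
rewrite /dotp; have -> : d%:R * `|x| ^+ 2 = \sum_(i < d) `|x| ^+ 2.
  by rewrite sumr_const card_ord mulr_natl.
apply: ler_sum => i _; rewrite -expr2 -real_normK ?num_real //.
by rewrite -sq_le ?normr_ge0 // coord_le_mx.
Qed.

Lemma en_small (x : V) e : 0 < e -> `|x| < e / (d%:R + 1) -> en x < e.
Proof.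
move=> he hx; have hd : 0 < d%:R + 1 :> R by rewrite ltr_wpDl.
have hx0 := normr_ge0 x.
rewrite en_ltE ?ltW //; apply: le_lt_trans (en_le_mx x) _.
have h1 : `|x| * (d%:R + 1) < e by rewrite -ltr_pdivlMr.
have h2 : 0 <= d%:R :> R by [].
have h3 : (`|x| * (d%:R + 1)) ^+ 2 < e ^+ 2.
  by rewrite -sq_lt // ?ltW // mulr_ge0 // ltW.
have h4 : d%:R * `|x| ^+ 2 <= (`|x| * (d%:R + 1)) ^+ 2.
  rewrite exprMn mulrC ler_wpM2l ?sqr_ge0 //; nra.
exact: le_lt_trans h4 h3.
Qed.

Lemma eclosed_closed (A : set V) : eclosed A -> closed A.
Proof.
move=> hA x hx; apply: hA => e he.
have hd : 0 < d%:R + 1 :> R by rewrite ltr_wpDl.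
have he' : 0 < e / (d%:R + 1) by rewrite divr_gt0.
have [a [Aa ba]] := hx _ (nbhsx_ballx x _ he').
exists a => //; rewrite enB; apply: en_small => //.
by move: ba; rewrite -ball_normE /ball_ /=.
Qed.

Lemma lip_cont (f : V -> R) (L : R) :
  (forall x y, `|f x - f y| <= L * en (x - y)) -> continuous f.
Proof.
move=> hf x B /= /(nbhs_ballP (f x)) [e he hB].
have hd : 0 < d%:R + 1 :> R by rewrite ltr_wpDl.
pose L' := `|L| + 1.
have hL' : 0 < L' by rewrite ltr_wpDl.
have he' : 0 < e / L' / (d%:R + 1) by rewrite !divr_gt0.
apply/nbhs_ballP; exists (e / L' / (d%:R + 1)) => // y; rewrite -ball_normE /ball_ /= => hy.
apply: hB; rewrite -ball_normE /ball_ /=.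
have h1 : en (x - y) < e / L' by apply: en_small => //; rewrite divr_gt0.
apply: le_lt_trans (hf x y) _.
have h2 : L * en (x - y) <= `|L| * en (x - y) by rewrite ler_wpM2r ?en_ge0 ?ler_norm.
apply: le_lt_trans h2 _.
have h3 : `|L| * en (x - y) <= L' * en (x - y) by rewrite ler_wpM2r ?en_ge0 // lerDl.
apply: le_lt_trans h3 _.
by rewrite mulrC -ltr_pdivlMr.
Qed.

Lemma gen_max (A : set V) (f : V -> R) (L : R) :
  A !=set0 -> eclosed A -> (exists M, forall x, A x -> en x <= M) ->
  (forall x y, `|f x - f y| <= L * en (x - y)) ->
  exists2 c, A c & forall x, A x -> f x <= f c.
Proof.
move=> A0 cA [M hM] hf.
have cpA : compact A.
  apply: bounded_closed_compact; last exact: eclosed_closed.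
  exists M; split; first exact: num_real.
  move=> M' hM' x Ax; apply: le_trans (mx_le_en x) _.
  exact: le_trans (hM x Ax) (ltW hM').
have cf : {within A, continuous f} by apply: continuous_subspaceT; exact: lip_cont hf.
have [c cA' hc] := compact_EVT_max A0 cpA cf.
exists c; first by move: cA'; rewrite inE.
by move=> x Ax; apply: hc; rewrite inE.
Qed.

End Topo.

Lemma LIM (R : realType) (X B : R) :
  (forall s, 0 < s -> s < 2^-1 -> X <= s * B) -> X <= 0.
Proof.
move=> h; rewrite leNgt; apply/negP => hX.
set b := `|B| + 1.
have hb : 0 < b by rewrite ltr_wpDl.
have hBb : B <= b by rewrite /b (le_trans (ler_norm B)) // lerDl.
set s := Num.min (4^-1) (X / (2 * b)).
have hs : 0 < s by rewrite lt_min invr_gt0 ltr0n divr_gt0 ?mulr_gt0.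
have hs1 : s <= 4^-1 by rewrite ge_min lexx.
have hs2 : s <= X / (2 * b) by rewrite ge_min lexx orbT.
have hs2' : s * (2 * b) <= X by rewrite -ler_pdivlMr ?mulr_gt0.
have h4 : (4^-1 : R) < 2^-1 by rewrite ltf_pV2 ?posrE ?ltr_nat.
have := h s hs (le_lt_trans hs1 h4).
have : s * B <= s * b by rewrite ler_pM2l.
nra.
Qed.

Lemma EQL (R : realType) d (p q : 'rV[R]_d) :
  enorm (p + q) = enorm p + enorm q -> 0 < enorm q ->
  p = (enorm p / enorm q) *: q.
Proof.
move=> he hq.
have h1 : dotp p q = enorm p * enorm q.
  have := congr1 (fun x => x ^+ 2) he; rewrite /= en_sq n2D -!en_sq; lra.
have h2 : dotp (enorm q *: p - enorm p *: q) (enorm q *: p - enorm p *: q) = 0.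
  rewrite n2B !dpZl !dpZr h1 -!en_sq; ring.
have := dp_eq0 h2; move/eqP; rewrite subr_eq0 => /eqP h3.
apply: (@scalerI _ _ (enorm q)); first by rewrite gt_eqF.
by rewrite h3 scalerA mulrCA mulfV ?gt_eqF // mulr1.
Qed.

Section Geo.
Variables (R : realType) (d : nat) (r : R) (K : set 'rV[R]_d).
Hypothesis hr : 0 < r.
Hypothesis hKs : K `<=` @sphere R d.
Local Notation V := 'rV[R]_d.
Local Notation dp := (@dotp R d).
Local Notation en := (@enorm R d).
Local Notation C := (Rcone r K).

Lemma n2Bs (x v : V) (a : R) : dp (x - a *: v) (x - a *: v) = dp x x - 2 * a * dp x v + a ^+ 2 * dp v v.
Proof. by rewrite n2B dpZr dpZl dpZr; ring. Qed.

Lemma Kunit v : K v -> dp v v = 1.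
Proof. by move=> /hKs /sphereE. Qed.

Lemma inC x : C x <-> forall v, K v -> 2 * r * dp x v <= dp x x.
Proof.
split.
  move=> hx v Kv; have h := hx v Kv; rewrite /eball /= in h.
  have h2 : r <= en (x - r *: v) by rewrite leNgt; apply/negP.
  move: h2; rewrite (sq_le (ltW hr) (en_ge0 _)) en_sq n2Bs (Kunit Kv) mulr1; lra.
move=> h v Kv; rewrite /eball /= => hlt.
move: hlt; rewrite en_ltE ?ltW // n2Bs (Kunit Kv) mulr1.
have := h v Kv; lra.
Qed.

Lemma C0 : C 0.
Proof. by apply/inC => v Kv; rewrite dp0l dp0l mulr0. Qed.

Lemma polar_tan t : (forall v, K v -> dp t v <= 0) -> Tan C 0 t.
Proof.
move=> ht e he.
have ht1 : 0 < en t + 1 by rewrite ltr_wpDl ?en_ge0.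
set s := e / (en t + 1).
have hs : 0 < s by rewrite divr_gt0.
exists (s *: t).
  split.
    apply/inC => v Kv; rewrite dpZl.
    rewrite mulrA; apply: (le_trans _ (dp_ge0 _)); apply: mulr_ge0_le0; last exact: ht.
    by apply: mulr_ge0; [apply: mulr_ge0 =>//; exact: ltW | exact: ltW].
  rewrite subr0 enZ ger0_norm ?ltW // /s mulrAC ltr_pdivrMr //.
  by rewrite ltr_pM2l // ltrDl.
exists s^-1; first by rewrite invr_gt0.
by rewrite subr0 scalerA mulVf ?gt_eqF // scale1r subrr en0.
Qed.

Lemma K_Nor v : K v -> Nor C 0 v.
Proof.
move=> Kv t ht; rewrite leNgt; apply/negP => ha.
set a := dp v t in ha.
set T := en t.
have hT : 0 <= T by exact: en_ge0.
set e := Num.min 1 (Num.min (a / 4) (a * r / (2 * (T + 1)))).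
have he : 0 < e by rewrite !lt_min ltr01 !divr_gt0 ?mulr_gt0 // ltr_wpDl.
have he1 : e <= 1 by rewrite ge_min lexx.
have he2 : e <= a / 4 by rewrite /e !ge_min lexx orbT.
have he3 : e <= a * r / (2 * (T + 1)) by rewrite /e !ge_min lexx !orbT.
have [x [Cx hx] [r' hr' hrx]] := ht e he.
rewrite subr0 in hx hrx.
have vu := Kunit Kv.
have lb : a - e < dp v (r' *: x).
  have := CSabs v (r' *: x - t); rewrite /enorm vu sqrtr1 mul1r -/(enorm _) dpBr.
  rewrite -/a => h1; have := le_lt_trans h1 hrx; rewrite ltr_norml; lra.
have hxC := (proj1 (inC x) Cx) v Kv.
have hrxn : en (r' *: x) <= T + e.
  have := en_triangle (r' *: x - t) t; rewrite subrK -/T; lra.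
have ub : dp v (r' *: x) <= (T + e) * e / (2 * r).
  rewrite dpZr dpC.
  have h1 : r' * dp x v <= r' * (dp x x / (2 * r)).
    by rewrite ler_pM2l // ler_pdivlMr ?mulr_gt0 // mulrC.
  apply: le_trans h1 _.
  have -> : r' * (dp x x / (2 * r)) = en (r' *: x) * en x / (2 * r).
    by rewrite enZ ger0_norm ?ltW // -en_sq expr2 !mulrA.
  rewrite ler_pM2r ?invr_gt0 ?mulr_gt0 //.
  apply: ler_pM => //; [exact: en_ge0 | exact: en_ge0 | exact: ltW].
have : (T + e) * e / (2 * r) <= a / 4.
  have h1 : (T + e) * e <= (T + 1) * e by rewrite ler_pM2r // lerD2l.
  rewrite ler_pdivrMr ?mulr_gt0 //.
  apply: le_trans h1 _.
  move: he3; rewrite ler_pdivlMr ?mulr_gt0 ?ltr_wpDl //.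
  move=> h3; nra.
lra.
Qed.

Lemma ball_lemma v : eclosed K -> sphere v ->
  (forall x, en (x - r *: v) < r -> ~ C x) -> K v.
Proof.
move=> hKc /sphereE vu hb; apply: hKc => e he.
set s := Num.min 1 (e ^+ 2).
have hs : 0 < s by rewrite lt_min ltr01 exprn_gt0.
have hs1 : s <= 1 by rewrite ge_min lexx.
have hse : s <= e ^+ 2 by rewrite ge_min lexx orbT.
set c := r * (2 - s).
have hc : 0 < c by rewrite mulr_gt0 // subr_gt0 (le_lt_trans hs1) // ltr1n.
set x := c *: v.
have hx : en (x - r *: v) < r.
  rewrite /x -scalerBl enZ /enorm vu sqrtr1 mulr1 /c.
  rewrite ger0_norm; last by rewrite subr_ge0 ler_pMr //; lra.
  have := mulr_gt0 hr hs; lra.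
have [a [Ka ha]] : exists a, K a /\ dp x x < 2 * r * dp x a.
  case: (pselect (exists a, K a /\ dp x x < 2 * r * dp x a)) => [//|hn].
  exfalso; apply: (hb x hx); apply/inC => a Ka; rewrite leNgt; apply/negP => hl.
  by apply: hn; exists a.
exists a => //.
rewrite en_ltE ?ltW // n2B (Kunit Ka) vu.
move: ha; rewrite /x !dpZl !dpZr vu mulr1 => h.
have h1 : c * c < c * (2 * r * dp a v) by rewrite (mulrCA c (2 * r)) (dpC a v).
move: h1; rewrite ltr_pM2l // {1}/c => h1.
have h2 : r * (2 - s) < r * (2 * dp a v) by rewrite mulrA (mulrC r 2).
move: h2; rewrite ltr_pM2l // => h3.
lra.
Qed.

Lemma Nor_convex : convex_set (Nor C 0).
Proof.
move=> u1 u2 t h1 h2 ht0 ht1 v hv; rewrite dpDl !dpZl.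
have := h1 v hv; have := h2 v hv => a b.
have : 0 <= 1 - t by rewrite subr_ge0.
nra.
Qed.

Lemma Nor_cone : pos_hull (Nor C 0) `<=` Nor C 0.
Proof.
move=> x [l hl [u hu ->]] v hv; rewrite dpZl.
by apply: mulr_ge0_le0 => //; exact: hu.
Qed.

Lemma N_sph_convex : sph_convex (Nor C 0 `&` @sphere R d).
Proof.
rewrite /sph_convex /co_sph; apply/seteqP; split => z.
  move=> [hz sz]; split => //; apply: (hz (Nor C 0)); first exact: Nor_convex.
  move=> y [l hl [u [hu _] ->]]; apply: Nor_cone; exists l => //; by exists u.
move=> [hz sz]; split => //.
move=> D _ hD; apply: hD; exists 1; first exact: ler01.
by exists z; [split|rewrite scale1r].
Qed.

Lemma EX (y : V) : K !=set0 -> eclosed K ->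
  exists2 v, K v & forall w, K w -> dp y w <= dp y v.
Proof.
move=> K0 hKc.
apply: (gen_max (L := en y)) => //.
  by exists 1 => x /hKs; rewrite /sphere /= => ->.
move=> x z; rewrite -dpBr; exact: CSabs.
Qed.

Lemma unit_ge (v w : V) : dp v v = 1 -> dp w w = 1 -> -1 <= dp v w.
Proof. move=> hv hw; have := dp_ge0 (v + w); rewrite n2D hv hw; lra. Qed.

Lemma FO (y v0 : V) : sph_convex K -> K v0 ->
  (forall w, K w -> dp y w <= dp y v0) -> 0 <= dp y v0 ->
  forall v, K v -> dp y v <= dp y v0 * dp v v0.
Proof.
move=> hsc Kv0 hmax hm v Kv.
have u0 := Kunit Kv0; have u1 := Kunit Kv.
set m := dp y v0.
set D := dp (v - v0) (v - v0).
have hD : D = 2 - 2 * dp v v0 by rewrite /D n2B u0 u1; ring.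
have hD0 : 0 <= D by exact: dp_ge0.
have hD4 : D <= 4 by have := unit_ge u1 u0; lra.
suff : dp y v - m + m * D / 2 <= 0 by rewrite hD; lra.
apply: (LIM (B := m * D / 2)) => s hs hs2.
set w := (1 - s) *: v0 + s *: v.
have hw2 : dp w w = 1 - s * D + s ^+ 2 * D.
  rewrite /w n2D !dpZl !dpZr u0 u1 hD ?(dpC v0 v); ring.
have hsD : s * D * (1 - s) <= 4 * s * (1 - s).
  have : 0 <= s * (1 - s) by apply: mulr_ge0; lra.
  nra.
have hq : 4 * s * (1 - s) < 1 by nra.
have hwpos : 0 < dp w w by rewrite hw2; nra.
set n := en w.
have hn : 0 < n by rewrite /n /enorm sqrtr_gt0.
have hn2 : n ^+ 2 = dp w w by rewrite /n en_sq.
have Kw : K (n^-1 *: w).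
  rewrite -hsc; split.
    move=> D' cD' hD'.
    have -> : n^-1 *: w = (1 - s) *: (n^-1 *: v0) + (1 - (1 - s)) *: (n^-1 *: v).
      by rewrite /w scalerDr !scalerA !(mulrC n^-1) opprB addrCA subrr addr0.
    apply: cD'; [apply: hD'|apply: hD'| lra | lra].
      by exists n^-1; [rewrite invr_ge0 ltW | exists v0].
    by exists n^-1; [rewrite invr_ge0 ltW | exists v].
  apply/sphereE; rewrite dpZl dpZr -hn2; field; by rewrite gt_eqF.
have h1 := hmax _ Kw.
rewrite dpZr -/m in h1.
have h2 : dp y w <= m * n by rewrite -ler_pdivrMr // mulrC.
have hB : n <= 1 - s * D / 2 + s ^+ 2 * D / 2.
  have hB0 : 0 <= 1 - s * D / 2 + s ^+ 2 * D / 2 by lra.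
  rewrite (sq_le (ltW hn) hB0) hn2 hw2.
  have -> : (1 - s * D / 2 + s ^+ 2 * D / 2) ^+ 2 = 1 - s * D + s ^+ 2 * D + (s * D / 2 - s ^+ 2 * D / 2) ^+ 2 by field.
  by rewrite lerDl sqr_ge0.
have h3 : dp y w = (1 - s) * m + s * dp y v by rewrite /w dpDr !dpZr.
have h4 : m * n <= m * (1 - s * D / 2 + s ^+ 2 * D / 2) by rewrite ler_wpM2l.
have h5 : s * (dp y v - m) <= s * (m * D * (s - 1) / 2).
  have : (1 - s) * m + s * dp y v <= m * (1 - s * D / 2 + s ^+ 2 * D / 2).
    by rewrite -h3; exact: le_trans h2 h4.
  move=> h; have -> : s * (m * D * (s - 1) / 2) = m * (1 - s * D / 2 + s ^+ 2 * D / 2) - m by ring.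
  have -> : s * (dp y v - m) = (1 - s) * m + s * dp y v - m by ring.
  lra.
move: h5; rewrite ler_pM2l // => h5.
have -> : s * (m * D / 2) = m * D * s / 2 by ring.
lra.
Qed.

Lemma N_sub_K u : sph_convex K -> K !=set0 -> eclosed K ->
  Nor C 0 u -> sphere u -> K u.
Proof.
move=> hsc K0 hKc hu /sphereE u1.
have [v0 Kv0 hmax] := EX u K0 hKc.
set m := dp u v0.
have v1 := Kunit Kv0.
have [hm|hm] := leP m 0.
  have ht : Tan C 0 u by apply: polar_tan => v Kv; exact: le_trans (hmax v Kv) hm.
  by have := hu u ht; rewrite u1 ler10.
have hfo := FO hsc Kv0 hmax (ltW hm).
have ht : Tan C 0 (u - m *: v0).
  apply: polar_tan => v Kv; rewrite dpBl dpZl (dpC u) (dpC v0).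
  have := hfo v Kv; rewrite -/m (dpC v u); lra.
have := hu _ ht; rewrite dpBr dpZr -/m u1 => h.
have hm1 : m <= 1 by have := CS u v0; rewrite /enorm u1 v1 sqrtr1 mulr1.
have hm1' : m = 1 by nra.
have : dp (u - v0) (u - v0) = 0 by rewrite n2B u1 v1 -/m hm1'; ring.
by move/dp_eq0/eqP; rewrite subr_eq0 => /eqP ->.
Qed.

Lemma Unp_conv y a : sph_convex K -> K !=set0 -> eclosed K ->
  C a -> en (y - a) < r -> Unp C y.
Proof.
move=> hsc K0 hKc Ca hya.
case: (pselect (C y)) => Cy.
  exists y; split; first by split => // b _; rewrite subrr en0 en_ge0.
  move=> x [Cx hx]; have := hx y Cy; rewrite subrr en0 => h.
  have h0 : en (y - x) = 0 by apply/eqP; rewrite eq_le h en_ge0.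
  by have := en_eq0 h0; move/eqP; rewrite subr_eq0 => /eqP.
have [v0 Kv0 hmax] := EX y K0 hKc.
have v1 := Kunit Kv0.
have [v [Kv hv]] : exists v, K v /\ dp y y < 2 * r * dp y v.
  case: (pselect (exists v, K v /\ dp y y < 2 * r * dp y v)) => [//|hn].
  exfalso; apply: Cy; apply/inC => v Kv; rewrite leNgt; apply/negP => hl.
  by apply: hn; exists v.
set m := dp y v0.
have hm : 0 < m.
  have := hmax v Kv; have := dp_ge0 y; rewrite -/m => h1 h2.
  have : 0 < 2 * r * dp y v by exact: le_lt_trans h1 hv.
  rewrite pmulr_rgt0 ?mulr_gt0 // => h3; exact: lt_le_trans h3 h2.
have hfo := FO hsc Kv0 hmax (ltW hm).
set b := y - r *: v0.
set t := en b.
have ht0 : 0 <= t by exact: en_ge0.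
have hbv : dp b b = dp y y - 2 * r * m + r ^+ 2 by rewrite /b n2Bs v1 mulr1.
have LB : forall c, C c -> r - t <= en (y - c).
  move=> c Cc.
  have h1 : r <= en (c - r *: v0).
    rewrite (sq_le (ltW hr) (en_ge0 _)) en_sq n2Bs v1 mulr1.
    have := (proj1 (inC c) Cc) v0 Kv0; lra.
  have h2 := en_tri3 c y (r *: v0).
  rewrite (enB c y) -/b -/t in h2; lra.
have htpos : 0 < t by have := LB a Ca; lra.
have htr : t < r.
  rewrite (sq_lt ht0 (ltW hr)) /t en_sq hbv.
  have := hmax v Kv; rewrite -/m => h.
  have : 2 * r * dp y v <= 2 * r * m by rewrite ler_pM2l ?mulr_gt0.
  lra.
set k := r / t.
have hk : k * t = r by rewrite /k mulfVK ?gt_eqF.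
have hk1 : 1 < k by rewrite /k ltr_pdivlMr // mul1r.
set cs := r *: v0 + k *: b.
have hcsy : en (y - cs) = r - t.
  have -> : y - cs = (1 - k) *: b by rewrite /cs scalerBl scale1r opprD addrA -/b.
  by rewrite enZ ler0_norm ?subr_le0 ?ltW // -/t opprB mulrBl hk mul1r.
have Ccs : C cs.
  apply/inC => w Kw.
  have hy : y = r *: v0 + b by rewrite /b addrC subrK.
  have hbb : dp b b = t ^+ 2 by rewrite /t en_sq.
  have hf := hfo w Kw.
  have hq : dp w v0 <= 1 by have := CS w v0; rewrite /enorm (Kunit Kw) v1 sqrtr1 mulr1.
  have hbeta : - t <= dp b v0.
    have := CSabs b v0; rewrite /enorm v1 sqrtr1 mulr1 -/(enorm b) -/t ler_norml; lra.
  rewrite /cs; clearbody cs k t b.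
  rewrite hy !dpDl !dpZl (dpC v0 w) v1 mulr1 in hf.
  rewrite n2D !dpZl !dpZr v1 mulr1 dpDl !dpZl.
  rewrite hbb (dpC b w) (dpC v0 w) (dpC v0 b).
  set q := dp w v0 in hq hf *.
  set be := dp b v0 in hbeta hf *.
  have hkb : 0 <= r + k * be.
    have : - r <= k * be by rewrite -hk -mulrN ler_pM2l ?(lt_trans ltr01 hk1).
    lra.
  have h1 : dp w b <= be * q by rewrite (dpC w b); nra.
  have h2 : k * dp w b <= k * (be * q) by rewrite ler_pM2l ?(lt_trans ltr01 hk1).
  have h3 : 0 <= (1 - q) * (r + k * be) by apply: mulr_ge0; lra.
  have h4 : k ^+ 2 * t ^+ 2 = r ^+ 2 by rewrite -exprMn hk.
  have h5 : k * (k * t ^+ 2) = r ^+ 2 by rewrite mulrA -expr2 h4.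
  rewrite h5.
  have h6 : 0 <= 2 * r * ((1 - q) * (r + k * be)) by apply: mulr_ge0 => //; apply: mulr_ge0 => //; exact: ltW.
  have h7 : 2 * r * (k * dp w b) <= 2 * r * (k * (be * q)) by rewrite ler_pM2l ?mulr_gt0.
  lra.
exists cs; split.
  split => // c Cc; rewrite hcsy; exact: LB.
move=> c [Cc hc].
have e1 : en (y - c) = r - t.
  apply/eqP; rewrite eq_le LB // andbT -hcsy; exact: hc.
set p := c - y.
have ep : en p = r - t by rewrite /p enB.
have hpb : en (p + b) = en p + en b.
  have h1 : r <= en (p + b).
    have -> : p + b = c - r *: v0 by rewrite /p /b addrA subrK.
    rewrite (sq_le (ltW hr) (en_ge0 _)) en_sq n2Bs v1 mulr1.
    have := (proj1 (inC c) Cc) v0 Kv0; lra.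
  have h2 := en_triangle p b.
  rewrite ep -/t in h1 h2 *; apply/eqP; rewrite eq_le h2 /=; lra.
have := EQL hpb htpos; rewrite ep -/t => hp.
have -> : c = y + p by rewrite /p addrC subrK.
have hy : y = r *: v0 + b by rewrite /b addrC subrK.
rewrite hp /cs.
clearbody cs k t b.
rewrite hy -addrA; congr (_ + _).
rewrite -{2}(scale1r b) -scalerDl; congr (_ *: _).
have -> : k = r / t by rewrite -hk mulfK ?gt_eqF.
by field; rewrite gt_eqF.
Qed.

Definition cfam (s : seq (R * V)) := forall p, p \in s -> 0 <= p.1 /\ K p.2.
Definition lin (s : seq (R * V)) : V := \sum_(p <- s) p.1 *: p.2.
Definition wsum (s : seq (R * V)) : R := \sum_(p <- s) p.1.
Definition scl (t : R) (s : seq (R * V)) := map (fun p => (t * p.1, p.2)) s.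
Definition Q0 (x : V) := exists s, [/\ cfam s, wsum s = 1 & x = lin s].
Definition Cn (x : V) := exists s, cfam s /\ x = lin s.
Definition Q (x : V) := forall e, 0 < e -> exists2 q, Q0 q & en (q - x) < e.

Lemma lin_scl t s : lin (scl t s) = t *: lin s.
Proof.
rewrite /lin /scl big_map scaler_sumr; apply: eq_bigr => p _; by rewrite scalerA.
Qed.
Lemma wsum_scl t s : wsum (scl t s) = t * wsum s.
Proof. by rewrite /wsum /scl big_map mulr_sumr. Qed.
Lemma cfam_scl t s : 0 <= t -> cfam s -> cfam (scl t s).
Proof.
move=> ht hs p /mapP [q hq ->] /=; have [h1 h2] := hs q hq; split => //.
exact: mulr_ge0.
Qed.
Lemma cfam_cat s1 s2 : cfam s1 -> cfam s2 -> cfam (s1 ++ s2).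
Proof. by move=> h1 h2 p; rewrite mem_cat => /orP [/h1|/h2]. Qed.
Lemma lin_cat s1 s2 : lin (s1 ++ s2) = lin s1 + lin s2.
Proof. by rewrite /lin big_cat. Qed.
Lemma wsum_cat s1 s2 : wsum (s1 ++ s2) = wsum s1 + wsum s2.
Proof. by rewrite /wsum big_cat. Qed.

Lemma dp_lin w s : dp w (lin s) = \sum_(p <- s) p.1 * dp w p.2.
Proof.
rewrite /lin; elim: s => [|p s IH]; first by rewrite !big_nil dp0r.
by rewrite !big_cons dpDr dpZr IH.
Qed.

Lemma sum_le s (f : V -> R) c : cfam s -> (forall v, K v -> f v <= c) ->
  \sum_(p <- s) p.1 * f p.2 <= wsum s * c.
Proof.
move=> hs hf; rewrite /wsum mulr_suml big_seq [X in _ <= X]big_seq.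
apply: ler_sum => p hp; have [h1 h2] := hs p hp.
by rewrite ler_wpM2l // hf.
Qed.

Lemma wsum_ge0 s : cfam s -> 0 <= wsum s.
Proof.
move=> hs; rewrite /wsum big_seq; apply: sumr_ge0 => p hp; exact: (hs p hp).1.
Qed.

Lemma wsum0_lin s : cfam s -> wsum s = 0 -> lin s = 0.
Proof.
elim: s => [|p s IH] hs; first by rewrite /lin big_nil.
have hp := hs p (mem_head p s).
have hs' : cfam s by move=> q hq; apply: hs; rewrite in_cons hq orbT.
rewrite /wsum big_cons => h.
have h2 := wsum_ge0 hs'.
have hp0 : p.1 = 0 by have := hp.1; rewrite /wsum in h2; lra.
have hw : wsum s = 0 by rewrite /wsum; move: h; rewrite hp0 add0r.
by rewrite /lin big_cons hp0 scale0r add0r -/(lin s) IH.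
Qed.

Lemma Cn_convex : convex_set Cn.
Proof.
move=> x y t [s1 [h1 ->]] [s2 [h2 ->]] ht0 ht1.
exists (scl t s1 ++ scl (1 - t) s2); split.
  by apply: cfam_cat; apply: cfam_scl => //; rewrite subr_ge0.
by rewrite lin_cat !lin_scl.
Qed.

Lemma conv_Cn : conv (pos_hull K) `<=` Cn.
Proof.
move=> x hx; apply: hx; first exact: Cn_convex.
move=> y [l hl [v Kv ->]]; exists [:: (l, v)]; split.
  by move=> p; rewrite inE => /eqP -> /=.
by rewrite /lin big_cons big_nil addr0.
Qed.

Lemma Q0_convex : convex_set Q0.
Proof.
move=> x y t [s1 [h1 w1 ->]] [s2 [h2 w2 ->]] ht0 ht1.
exists (scl t s1 ++ scl (1 - t) s2); split.
- by apply: cfam_cat; apply: cfam_scl => //; rewrite subr_ge0.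
- by rewrite wsum_cat !wsum_scl w1 w2; ring.
- by rewrite lin_cat !lin_scl.
Qed.

Lemma K_Q0 v : K v -> Q0 v.
Proof.
move=> Kv; exists [:: (1, v)]; split.
- by move=> p; rewrite inE => /eqP -> /=; split => //; exact: ler01.
- by rewrite /wsum big_cons big_nil addr0.
- by rewrite /lin big_cons big_nil addr0 scale1r.
Qed.

Lemma Q0_C x q : C x -> Q0 q -> 2 * r * dp x q <= dp x x.
Proof.
move=> Cx [s [hs w1 ->]].
rewrite dp_lin mulr_sumr.
have := sum_le (f := fun v => 2 * r * dp x v) (c := dp x x) hs.
rewrite w1 mul1r => h; apply: le_trans (h _); last by move=> v Kv; exact: (proj1 (inC x) Cx).
by apply: ler_sum => p _; rewrite mulrCA.
Qed.

Lemma Q0_norm q : Q0 q -> en q <= 1.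
Proof.
move=> hq; have [s [hs w1 hq']] := hq.
have h : dp q q <= en q.
  have := sum_le (f := fun v => dp q v) (c := en q) hs.
  rewrite w1 mul1r -dp_lin -hq' => h; apply: h => v Kv.
  exact: dp_le_en (Kunit Kv).
have h0 := en_ge0 q.
rewrite -en_sq in h; nra.
Qed.

Lemma Q0_Q q : Q0 q -> Q q.
Proof. by move=> hq e he; exists q => //; rewrite subrr en0. Qed.

Lemma Q_eclosed : eclosed Q.
Proof.
move=> x hx e he.
have he2 : 0 < e / 2 by rewrite divr_gt0.
have [y Qy hy] := hx _ he2.
have [q Q0q hq] := Qy _ he2.
exists q => //; have := en_tri3 q y x; lra.
Qed.

Lemma Q_convex : convex_set Q.
Proof.
move=> x y t hx hy ht0 ht1 e he.
have [q1 h1 e1] := hx e he; have [q2 h2 e2] := hy e he.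
exists (t *: q1 + (1 - t) *: q2); first exact: Q0_convex.
have -> : t *: q1 + (1 - t) *: q2 - (t *: x + (1 - t) *: y) = t *: (q1 - x) + (1 - t) *: (q2 - y).
  by rewrite !scalerBr opprD !addrA; congr (_ + _); rewrite addrAC.
apply: le_lt_trans (en_triangle _ _) _; rewrite !enZ ger0_norm // ger0_norm ?subr_ge0 //.
have := ltW e1; have := ltW e2 => a b.
have [ht|ht] := eqVneq t 0.
  by rewrite ht mul0r add0r subr0 mul1r.
have : t * en (q1 - x) < t * e by rewrite ltr_pM2l // lt_def ht ht0.
have : (1 - t) * en (q2 - y) <= (1 - t) * e by rewrite ler_wpM2l // subr_ge0.
lra.
Qed.

Lemma Q_norm q : Q q -> en q <= 1.
Proof.
move=> hq; suff : en q - 1 <= 0 by lra.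
apply: (LIM (B := 1)) => s hs _.
have [q' h1 h2] := hq s hs.
have := Q0_norm h1; have := en_tri3 q q' 0; rewrite !subr0 (enB q q'); lra.
Qed.

Lemma Q_C x q : C x -> Q q -> 2 * r * dp x q <= dp x x.
Proof.
move=> Cx hq; suff : 2 * r * dp x q - dp x x <= 0 by lra.
apply: (LIM (B := 2 * r * en x)) => s hs _.
have [q' h1 h2] := hq s hs.
have := Q0_C Cx h1.
have : 2 * r * dp x (q - q') <= 2 * r * (en x * s).
  rewrite ler_pM2l ?mulr_gt0 //; apply: le_trans (CS _ _) _.
  by rewrite ler_wpM2l ?en_ge0 // enB ltW.
rewrite dpBr; nra.
Qed.

Lemma Q_K q : eclosed K -> Q q -> dp q q = 1 -> K q.
Proof.
move=> hKc hq q1; apply: hKc => e he.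
set e' := e ^+ 2 / 4.
have he' : 0 < e' by rewrite divr_gt0 ?exprn_gt0.
have [q' [s [hs w1 hq']] h2] := hq e' he'.
have [v [Kv hv]] : exists v, K v /\ 1 - e' < dp q v.
  case: (pselect (exists v, K v /\ 1 - e' < dp q v)) => [//|hn].
  exfalso.
  have := sum_le (f := fun v => dp q v) (c := 1 - e') hs.
  rewrite w1 mul1r -dp_lin -hq' => h.
  have h3 : dp q q' <= 1 - e'.
    apply: h => v Kv; rewrite leNgt; apply/negP => hl; apply: hn; by exists v.
  have h4 : dp q q' = 1 + dp q (q' - q) by rewrite dpBr q1; ring.
  have := CSabs q (q' - q); rewrite /enorm q1 sqrtr1 mul1r -/(enorm _) ler_norml => /andP [h5 _].
  lra.
exists v => //.
rewrite en_ltE ?ltW // n2B (Kunit Kv) q1 (dpC v q).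
have hE : 0 < e ^+ 2 by rewrite exprn_gt0.
have : 2 * e' < e ^+ 2 by rewrite /e'; lra.
lra.
Qed.

Lemma proj z : K !=set0 -> eclosed K ->
  exists2 p, Q p & forall x, Q x -> en (z - p) <= en (z - x).
Proof.
move=> [v0 Kv0] hKc.
have := @gen_max R d Q (fun x => - en (z - x)) 1.
case.
- by exists v0; apply: Q0_Q; exact: K_Q0.
- exact: Q_eclosed.
- by exists 1 => x; exact: Q_norm.
- move=> x y; rewrite mul1r opprK addrC.
  have e1 : (z - y) - (z - x) = x - y by rewrite opprB (addrC (z - y)) addrA subrK.
  have e2 : (z - x) - (z - y) = y - x by rewrite opprB (addrC (z - x)) addrA subrK.
  rewrite ler_norml; apply/andP; split.
    have := en_rev (z - x) (z - y); rewrite e2 (enB y x); lra.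
  by have := en_rev (z - y) (z - x); rewrite e1.
- move=> p Qp hp; exists p => // x Qx; have := hp x Qx; lra.
Qed.

Lemma var z p : Q p -> (forall x, Q x -> en (z - p) <= en (z - x)) ->
  forall x, Q x -> dp (z - p) (x - p) <= 0.
Proof.
move=> Qp hp x Qx.
apply: (LIM (B := dp (x - p) (x - p) / 2)) => s hs hs2.
have Qxs : Q (s *: x + (1 - s) *: p) by apply: Q_convex => //; lra.
have := hp _ Qxs; rewrite en_leE2.
have -> : z - (s *: x + (1 - s) *: p) = (z - p) - s *: (x - p).
  by apply/rowP => i; rewrite !mxE; ring.
rewrite n2Bs => h.
have h1 : s * (2 * dp (z - p) (x - p)) <= s * (s * dp (x - p) (x - p)) by nra.
move: h1; rewrite ler_pM2l // => h1.
lra.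
Qed.

Lemma reach_conv : K !=set0 -> eclosed K -> (r%:E <= reach C)%E -> sph_convex K.
Proof.
move=> K0 hKc hreach.
rewrite /sph_convex; apply/seteqP; split => z; last first.
  move=> Kz; split; last exact: hKs.
  move=> D' _ hD'; apply: hD'; exists 1; first exact: ler01.
  by exists z; rewrite ?scale1r.
move=> [hz /sphereE z1].
case: (pselect (K z)) => [//|nKz]; exfalso.
have [s [hs zs]] := conv_Cn hz.
set S := wsum s.
have hS0 := wsum_ge0 hs.
have hS : 0 < S.
  rewrite lt_def hS0 andbT; apply/eqP => h.
  have := wsum0_lin hs h; rewrite -zs => hz0.
  by move: z1; rewrite hz0 dp0l => /eqP; rewrite eq_sym oner_eq0.
set t0 := S^-1.
have ht0 : 0 < t0 by rewrite invr_gt0.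
have Qw0 : Q (t0 *: z).
  apply: Q0_Q; exists (scl t0 s); split.
  - exact: cfam_scl (ltW ht0) hs.
  - by rewrite wsum_scl -/S mulVf ?gt_eqF.
  - by rewrite lin_scl zs.
have [p Qp hp] := proj z K0 hKc.
have hv := var Qp hp.
have hpn : en p <= 1 := Q_norm Qp.
have hpz : dp p z <= en p by exact: dp_le_en z1.
have hp1 : en p < 1.
  rewrite lt_neqAle hpn andbT; apply/eqP => hp1.
  have p1 : dp p p = 1 by rewrite -en_sq hp1 expr1n.
  have Kp := Q_K hKc Qp p1.
  have hzp : z != p by apply/eqP => hzp; apply: nKz; rewrite hzp.
  have h1 : 0 < dp (z - p) (z - p).
    rewrite lt_def dp_ge0 andbT; apply/eqP => /dp_eq0/eqP; rewrite subr_eq0.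
    exact/negP.
  have := hv _ Qw0; rewrite dpBr !dpBl dpZr z1 p1 (dpC z p) dpZr.
  rewrite n2B z1 p1 (dpC z p) in h1.
  nra.
set n := z - p.
set be := dp n p.
have hbe : 0 < be.
  have := hv _ Qw0; rewrite dpBr dpZr -/n -/be => h.
  have : 0 < dp n z by rewrite /n dpBl z1; lra.
  nra.
have hnv : forall v, K v -> dp n v <= be.
  move=> v Kv; have := hv v (Q0_Q (K_Q0 Kv)); rewrite dpBr -/n -/be; lra.
have hnn : 0 < dp n n.
  rewrite lt_def dp_ge0 andbT; apply/eqP => /dp_eq0 hn0.
  by move: hbe; rewrite /be hn0 dp0l ltxx.
set c := 2 * r * be / dp n n.
have hc : 0 < c by rewrite /c divr_gt0 ?mulr_gt0.
set q := c *: n.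
set y := r *: p.
have hqq : dp q q = c * (2 * r * be).
  by rewrite /q dpZl dpZr /c; field; rewrite gt_eqF.
have Cq : C q.
  apply/inC => v Kv; rewrite hqq /q dpZl.
  have := hnv v Kv => h.
  have : c * dp n v <= c * be by rewrite ler_pM2l.
  have h2 : 0 < 2 * r by rewrite mulr_gt0.
  nra.
have LBy : forall x, C x -> en (y - 0) <= en (y - x).
  move=> x Cx; rewrite subr0 en_leE2 n2B.
  have := Q_C Cx Qp; rewrite /y !dpZl !dpZr (dpC x p); lra.
have E2 : dp (y - q) (y - q) = dp y y.
  rewrite n2B hqq /y /q !dpZl !dpZr ?(dpC p n) -/be; ring.
have Eq : en (y - q) = en (y - 0) by rewrite subr0 /enorm E2.
have nU : ~ Unp C y.
  move=> [a [[Ca ha] hu]].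
  have e0 : a = 0.
    apply: hu; split; first exact: C0.
    move=> b Cb; exact: LBy.
  have eq : a = q.
    apply: hu; split => // b Cb; rewrite Eq; exact: LBy.
  move: hqq; rewrite -eq e0 dp0l => h.
  have : 0 < c * (2 * r * be) by apply: mulr_gt0 => //; apply: mulr_gt0 => //; apply: mulr_gt0.
  by rewrite -h ltxx.
have hy : en (y - 0) < r.
  by rewrite subr0 /y enZ ger0_norm ?ltW // gtr_pMr.
have h1 : (reach C <= reach_at C 0)%E.
  by apply: ereal_inf_lbound; exists 0 => //; exact: C0.
have h2 : (reach_at C 0 <= (en (y - 0))%:E)%E.
  apply: ge_ereal_sup => _ [rho [hrho hb] <-].
  rewrite lee_fin leNgt; apply/negP => hl; apply: nU; apply: hb.
  by rewrite /eball /= subr0 -(subr0 y).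
have := le_trans hreach (le_trans h1 h2); rewrite lee_fin.
by rewrite leNgt hy.
Qed.

End Geo.









Theorem mainTheorem17 (R : realType) (d : nat) (r : R) (K : set 'rV[R]_d) :
  0 < r ->
  K !=set0 -> eclosed K -> K `<=` @sphere R d ->
  (exists2 w, (@sphere R d) w & forall v, K v -> 0 <= dotp v w) ->
  let N := Nor (Rcone r K) 0 `&` @sphere R d in
  [/\ (sph_convex K <-> (r%:E <= reach (Rcone r K))%E),
      ((r%:E <= reach (Rcone r K))%E <-> Rcone r K = Rcone r N) &
      (Rcone r K = Rcone r N <-> sph_convex K)].
Proof.
move=> hr K0 hKc hKs _ N.
have KsubN : K `<=` N.
  move=> v Kv; split; last exact: (hKs v Kv).
  exact: (K_Nor hr hKs Kv).
have KN : sph_convex K -> K = N.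
  move=> hsc; apply/seteqP; split => // u [hu su].
  exact: (N_sub_K hr hKs hsc K0 hKc hu su).
have AC : sph_convex K <-> Rcone r K = Rcone r N.
  split; first by move=> hsc; rewrite -(KN hsc).
  move=> hc.
  have NK : N `<=` K.
    move=> u [hu su]; apply: (ball_lemma hr hKs hKc su) => x hx.
    rewrite hc => hxN; exact: (hxN u (conj hu su)) hx.
  have -> : K = N by apply/seteqP; split.
  exact: N_sph_convex.
have AB : sph_convex K <-> (r%:E <= reach (Rcone r K))%E.
  split; last exact: reach_conv hr hKs K0 hKc.
  move=> hsc; apply: le_ereal_inf_tmp => _ [a Ca <-].
  apply: ereal_sup_ubound; exists r => //; split => // y hy.
  exact: (Unp_conv hr hKs hsc K0 hKc Ca hy).
split => //.
  by rewrite -AB.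
by split => h; [apply/AC | apply/AC].
Qed.
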